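(* Let $T>0$. Let $k,B:[0,T]\to(0,\infty)$ be smooth positive functions of $t$ only, where, writing $y=t-T\in[-T,0]$, $B$ satisfies $B''=k^2B$ with $B=1$ and $B'=0$ at $y=0$ (so that $B'(t)\le 0$ on $[0,T]$), and suppose that $\ln(B^2k)$ is nondecreasing and smooth on $[0,T]$. Consider the system $$\rho_t+m_x=R(\rho,m,t):=-\rho\frac{k'}{k}+\frac{m^2-1}{\rho}BB',\qquad m_t+\Big(\frac{m^2-1}{\rho}\Big)_x=S(\rho,m,t):=-2m\Big(\frac{B'}{B}+\frac{k'}{2k}\Big),$$ with initial data $(\rho,m)(x,0)=(\rho_0,m_0)(x)$, $\rho_0>0$, and let $(\rho^l,m^l)$ be the approximate solutions given by the fractional-step Lax--Friedrichs scheme described in the context. Suppose that for some constants $\delta_0>0$, $P_0>0$ and all $x\in\mathbb{R}$, $$\delta_0\le w(x,0)\le P_0,\quad -P_0\le z(x,0)\le 0\qquad(\text{or } 0\le w(x,0)\le P_0,\quad -P_0\le z(x,0)\le -\delta_0),$$ where $w(x,0)=\frac{m_0(x)+1}{\rho_0(x)}$, $z(x,0)=\frac{m_0(x)-1}{\rho_0(x)}$. Then there exist a constant $h_0>0$ and constants $P(T),A(T)>0$ such that for all time meshes $h\le h_0$ the Riemann invariants $w^l=\frac{m^l+1}{\rho^l}$, $z^l=\frac{m^l-1}{\rho^l}$ of the approximate solutions satisfy, for all $(x,t)\in\mathbb{R}\times[0,T]$, $$\delta_0e^{-A(T)T}\le w^l(x,t)\le P(T),\quad -P(T)\le z^l(x,t)\le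 0$$ (respectively, in the second case, $0\le w^l(x,t)\le P(T)$, $-P(T)\le z^l(x,t)\le -\delta_0e^{-A(T)T}$).
   Context: Notation: $'$ denotes $d/dt$ (equivalently $d/dy$). Write $U=(\rho,m)^\top$, $f(U)=(m,(m^2-1)/\rho)^\top$, $H(U,x,t)=(R,S)^\top$. The homogeneous system $\rho_t+m_x=0$, $m_t+((m^2-1)/\rho)_x=0$ (Chaplygin gas) has eigenvalues $\lambda_1=z=\frac{m-1}{\rho}$, $\lambda_2=w=\frac{m+1}{\rho}$; it is linearly degenerate, and its Riemann problems are solved by contact discontinuities (along which $z$, resp. $w$, is constant). Scheme: let $h>0$ (time mesh) and $l>0$ (space mesh) satisfy the CFL condition $\max_{i=1,2}\lambda_i(\rho^l,m^l)<l/(2h)\le\Lambda$ for a constant $\Lambda>0$. For integers $n\ge0$ and $j$ with $n+j$ even, let $Q_{nj}=\{(x,t):(j-1)l<x<(j+1)l,\ nh\le t<(n+1)h\}$. Set $U^0_j=U_0(jl)$ where $U_0=(\rho_0,m_0)$. Given the values $U^n_j$, in $Q_{nj}$ let $U^l_R$ be the Riemann solution of the homogeneous system with initial data $U^n_{j-1}$ for $x<jl$ and $U^n_{j+1}$ for $x>jl$ at $t=nh$, and define $U^l(x,t)=U^l_R(x,t)+H(U^l_R(x,t),x,t)(t-nh)$; then set $U^{n+1}_j=\frac{1}{2l}\int_{(j-1)l}^{(j+1)l}U^l(x,(n+1)h-0)\,dx$. The resulting piecewise-defined function $U^l=(\rho^l,m^l)$ on $\mathbb{R}\times[0,T]$ is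 the approximate solution. *)

(* Defs.v *)
From Stdlib Require Import Reals ZArith.
From Coquelicot Require Import Coquelicot.
Open Scope R_scope.

(* A state U = (rho, m). *)
Definition State := (R * R)%type.

(* Riemann invariants / eigenvalues: z = lambda_1, w = lambda_2. *)
Definition zinv (U : State) : R := (snd U - 1) / fst U.
Definition winv (U : State) : R := (snd U + 1) / fst U.

(* The state with Riemann invariants (w, z): rho = 2/(w-z), m = (w+z)/(w-z). *)
Definition state_of_wz (w z : R) : State := (2 / (w - z), (w + z) / (w - z)).

(* Self-similar Riemann solution of the homogeneous Chaplygin system at
   xi = x/t: a 1-contact of speed z_L (z constant across it), followed by a
   2-contact of speed w_R (w constant across it); the middle state has
   z = z_L and w = w_R. *)
Definition riemann_xi (UL UR : State) (xi : R) : State :=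
  if Rlt_dec xi (zinv UL) then UL
  else if Rlt_dec xi (winv UR) then state_of_wz (winv UR) (zinv UL)
  else UR.

Definition riemann_sol (UL UR : State) (x0 t0 x t : R) : State :=
  if Rle_dec t t0 then (if Rlt_dec x x0 then UL else UR)
  else riemann_xi UL UR ((x - x0) / (t - t0)).

Definition Rsrc (k B : R -> R) (U : State) (t : R) : R :=
  - fst U * Derive k t / k t + (snd U ^ 2 - 1) / fst U * B t * Derive B t.
Definition Ssrc (k B : R -> R) (U : State) (t : R) : R :=
  - 2 * snd U * (Derive B t / B t + Derive k t / (2 * k t)).

Definition cell_sol (k B : R -> R) (h l : R) (Un : Z -> State) (n : nat) (j : Z)
    (x t : R) : State :=
  let UR := riemann_sol (Un (j - 1)%Z) (Un (j + 1)%Z) (IZR j * l) (INR n * h) x t in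
  (fst UR + Rsrc k B UR t * (t - INR n * h),
   snd UR + Ssrc k B UR t * (t - INR n * h)).

Definition LF_step (k B : R -> R) (h l : R) (Un : Z -> State) (n : nat) : Z -> State :=
  fun j =>
    let a := (IZR j - 1) * l in
    let b := (IZR j + 1) * l in
    (RInt (fun x => fst (cell_sol k B h l Un n j x (INR (S n) * h))) a b / (2 * l),
     RInt (fun x => snd (cell_sol k B h l Un n j x (INR (S n) * h))) a b / (2 * l)).

Fixpoint LF_grid (k B : R -> R) (h l : R) (rho0 m0 : R -> R) (n : nat) : Z -> State :=
  match n with
  | O => fun j => (rho0 (IZR j * l), m0 (IZR j * l))
  | S n' => LF_step k B h l (LF_grid k B h l rho0 m0 n') n'
  end.

(* The approximate solution U^l(x,t): n = floor(t/h), and j the index with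
   n + j even and (j-1) l <= x < (j+1) l. *)
Definition LF_approx (k B : R -> R) (h l : R) (rho0 m0 : R -> R) (x t : R) : State :=
  let n := Z.to_nat (Int_part (t / h)) in
  let p : Z := if Nat.even n then 0%Z else 1%Z in
  let j := (2 * Int_part ((x / l - IZR p + 1) / 2) + p)%Z in
  cell_sol k B h l (LF_grid k B h l rho0 m0 n) n j x t.

(* CFL condition: the characteristic speeds of U^l on R x [0,T] stay below l/(2h). *)
Definition CFL (T : R) (k B : R -> R) (h l : R) (rho0 m0 : R -> R) : Prop :=
  forall x t, 0 <= t <= T ->
    Rabs (zinv (LF_approx k B h l rho0 m0 x t)) < l / (2 * h) /\
    Rabs (winv (LF_approx k B h l rho0 m0 x t)) < l / (2 * h).

(* Main.v *)
Require Import Defs.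
From Stdlib Require Import Reals ZArith.
From Coquelicot Require Import Coquelicot.
Open Scope R_scope.
From Stdlib Require Import Lra Lia.

Lemma deriv_nonneg_mono (g : R -> R) (T t D : R) :
  0 < T -> 0 <= t <= T ->
  (forall s u, 0 <= s -> s <= u -> u <= T -> g s <= g u) ->
  is_derive g t D -> 0 <= D.
Proof.
  intros HT Ht Hm Hd.
  apply is_derive_Reals in Hd.
  destruct (Rle_lt_dec 0 D) as [|HD]; [assumption|exfalso].
  assert (He : 0 < - D / 2) by lra.
  destruct (Hd (-D/2) He) as [del Hdel].
  pose proof (cond_pos del) as Hdp.
  destruct (Rlt_le_dec t T) as [HtT|HtT].
  - set (hh := Rmin (del/2) (T - t)).
    assert (Hh1 : 0 < hh) by (unfold hh; apply Rmin_pos; lra).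
    assert (Hh2 : hh <= del/2) by apply Rmin_l.
    assert (Hh3 : hh <= T - t) by apply Rmin_r.
    assert (Hq := Hdel hh (Rgt_not_eq _ _ Hh1)).
    assert (Habs : Rabs hh < del) by (rewrite Rabs_pos_eq; lra).
    specialize (Hq Habs).
    assert (Hg : g t <= g (t + hh)) by (apply Hm; lra).
    assert (0 <= (g (t + hh) - g t) / hh).
    { apply Rdiv_le_0_compat; lra. }
    apply Rabs_def2 in Hq. lra.
  - set (hh := - Rmin (del/2) T).
    assert (Hh0 : 0 < Rmin (del/2) T) by (apply Rmin_pos; lra).
    assert (Hh2 : Rmin (del/2) T <= del/2) by apply Rmin_l.
    assert (Hh3 : Rmin (del/2) T <= T) by apply Rmin_r.
    assert (Hh1 : hh < 0) by (unfold hh; lra).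
    assert (Hq := Hdel hh (Rlt_not_eq _ _ Hh1)).
    assert (Habs : Rabs hh < del) by (rewrite Rabs_left; unfold hh; lra).
    specialize (Hq Habs).
    assert (Hg : g (t + hh) <= g t) by (apply Hm; unfold hh; lra).
    assert (0 <= (g (t + hh) - g t) / hh).
    { replace ((g (t + hh) - g t) / hh) with ((g t - g (t+hh)) / (- hh)) by (field; lra).
      apply Rdiv_le_0_compat; lra. }
    apply Rabs_def2 in Hq. lra.
Qed.

Lemma bound_cont (f : R -> R) (T : R) : 0 <= T ->
  (forall t, 0 <= t <= T -> continuity_pt f t) ->
  exists M, 0 <= M /\ forall t, 0 <= t <= T -> Rabs (f t) <= M.
Proof.
  intros HT Hc.
  destruct (continuity_ab_maj (fun t => Rabs (f t)) 0 T HT) as [Mx [HM _]].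
  - intros c Hc'. change (continuity_pt (comp Rabs f) c).
    apply continuity_pt_comp; [auto | apply Rcontinuity_abs].
  - exists (Rabs (f Mx)). split; [apply Rabs_pos | exact HM].
Qed.

Lemma cont_of_ex (f : R -> R) t : ex_derive f t -> continuity_pt f t.
Proof.
  intro H. apply continuity_pt_filterlim. exact (@ex_derive_continuous R_AbsRing R_NormedModule f t H).
Qed.

Lemma exp_bound (C K c tau : R) : 0 <= C -> 0 <= K -> 0 <= c <= C -> 0 <= tau ->
  tau * C <= 1/2 ->
  exp (-(2*C + K + 1)*tau) * (1 + tau*K) <= 1 - tau * c.
Proof.
  intros HC HK Hc Ht HtC.
  assert (E1 := exp_ineq1_le (2*C*tau)).
  assert (E2 := exp_ineq1_le ((K+1)*tau)).
  assert (Hs : exp (-(2*C + K + 1)*tau) * (exp (2*C*tau) * exp ((K+1)*tau)) = 1).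
  { rewrite <- !exp_plus. replace (-(2*C + K + 1)*tau + (2*C*tau + (K+1)*tau)) with 0 by ring.
    apply exp_0. }
  assert (Hp := exp_pos (-(2*C + K + 1)*tau)).
  set (E := exp (-(2*C + K + 1)*tau)) in *.
  set (e1 := exp (2*C*tau)) in *. set (e2 := exp ((K+1)*tau)) in *.
  assert (Hprod : (1 + 2*C*tau) * (1 + (K+1)*tau) <= e1 * e2).
  { apply Rmult_le_compat; nra. }
  assert (E * ((1 + 2*C*tau) * (1 + tau*K)) <= 1).
  { assert (HH : (1 + 2*C*tau) * (1 + tau*K) <= e1 * e2); [|
     assert (E * ((1 + 2*C*tau) * (1 + tau*K)) <= E * (e1*e2)) by (apply Rmult_le_compat_l; lra); lra].
    assert ((1 + 2*C*tau) * (1 + tau*K) <= (1 + 2*C*tau) * (1 + (K+1)*tau)).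
    { apply Rmult_le_compat_l; nra. }
    lra. }
  assert (H3 : (1 - tau*C) * (1 + 2*C*tau) >= 1).
  { assert (0 <= tau*C) by nra. assert (0 <= (tau*C)*(1 - 2*(tau*C))) by nra. nra. }
  assert (tau * c <= tau * C) by (apply Rmult_le_compat_l; lra).
  assert (HX : 0 <= E * (1 + tau*K)) by (apply Rmult_le_pos; nra).
  set (X := E * (1 + tau*K)) in *.
  assert (HX2 : X * (1 + 2*C*tau) <= 1) by (unfold X; lra).
  destruct (Rle_lt_dec X (1 - tau*C)) as [|HH]; [lra|].
  assert (X * (1 + 2*C*tau) > (1 - tau*C)*(1+2*C*tau)) by (apply Rmult_gt_compat_r; nra).
  lra.
Qed.

Lemma div_ge (x n q : R) : 0 < q -> x * q <= n -> x <= n / q.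
Proof. intros Hq H. apply (Rmult_le_reg_r q); [lra|]. unfold Rdiv.
  rewrite Rmult_assoc, Rinv_l, Rmult_1_r by lra. lra. Qed.
Lemma div_le (x n q : R) : 0 < q -> n <= x * q -> n / q <= x.
Proof. intros Hq H. apply (Rmult_le_reg_r q); [lra|]. unfold Rdiv.
  rewrite Rmult_assoc, Rinv_l, Rmult_1_r by lra. lra. Qed.

Lemma src_core (rho m kk c bt tau L Kk Kb C : R) :
  0 < rho -> Rabs ((m+1)/rho) <= L -> Rabs ((m-1)/rho) <= L ->
  Rabs kk <= Kk -> Rabs bt <= Kb -> 0 <= c <= C -> 0 <= tau ->
  tau * (Kk + L*L*Kb) <= 1/2 -> tau * C <= 1/2 ->
  let rho' := rho + (-rho*kk + (m^2-1)/rho*bt)*tau in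
  let m' := m + (-2*m*c)*tau in
  let E := exp (-(2*C + (Kk + L*L*Kb) + 1)*tau) in
  rho/2 <= rho' /\
  (forall a, 0 < a -> a <= (m+1)/rho -> (m-1)/rho <= 0 ->
     a*E <= (m'+1)/rho' /\ (m'-1)/rho' <= 0) /\
  (forall a, 0 < a -> 0 <= (m+1)/rho -> (m-1)/rho <= -a ->
     0 <= (m'+1)/rho' /\ (m'-1)/rho' <= -(a*E)).
Proof.
  intros Hr Hw Hz Hk Hb Hc Ht HtK HtC rho' m' E.
  set (w := (m+1)/rho) in *. set (z := (m-1)/rho) in *.
  assert (Hm1 : m + 1 = w * rho) by (unfold w; field; lra).
  assert (Hm2 : m - 1 = z * rho) by (unfold z; field; lra).
  assert (HL : 0 <= L) by (pose proof (Rabs_pos w); lra).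
  assert (HKk : 0 <= Kk) by (pose proof (Rabs_pos kk); lra).
  assert (HKb : 0 <= Kb) by (pose proof (Rabs_pos bt); lra).
  set (K := Kk + L*L*Kb) in *.
  assert (HK : 0 <= K) by (unfold K; nra).
  set (q := 1 - tau*kk + tau*(z*w*bt)).
  assert (Hrho' : rho' = rho * q).
  { unfold rho', q. replace (m^2 - 1) with ((m+1)*(m-1)) by ring.
    rewrite Hm1, Hm2. field. lra. }
  assert (Hzwb : Rabs (z*w*bt) <= L*L*Kb).
  { rewrite !Rabs_mult.
    assert (Rabs z * Rabs w <= L * L) by (apply Rmult_le_compat; try apply Rabs_pos; lra).
    apply Rmult_le_compat; try apply Rabs_pos; try lra.
    apply Rmult_le_pos; apply Rabs_pos. }
  assert (Hq1 : 1 - tau*K <= q /\ q <= 1 + tau*K).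
  { apply Rabs_le_between in Hk. apply Rabs_le_between in Hzwb. unfold q, K. split; nra. }
  assert (Hq0 : 1/2 <= q) by lra.
  assert (Hn1 : m' + 1 = rho * (w*(1 - tau*c) - tau*c*z)).
  { unfold m'. assert (m = w*rho - 1) by lra. assert (z*rho = w*rho - 2) by lra. nra. }
  assert (Hn2 : m' - 1 = rho * (z*(1 - tau*c) - tau*c*w)).
  { unfold m'. assert (m = w*rho - 1) by lra. assert (z*rho = w*rho - 2) by lra. nra. }
  assert (Hw' : (m'+1)/rho' = (w*(1 - tau*c) - tau*c*z)/q).
  { rewrite Hn1, Hrho'. field. lra. }
  assert (Hz' : (m'-1)/rho' = (z*(1 - tau*c) - tau*c*w)/q).
  { rewrite Hn2, Hrho'. field. lra. }
  assert (HEb := exp_bound C K c tau (ltac:(lra)) HK Hc Ht HtC).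
  fold E in HEb.
  assert (HE : 0 < E) by apply exp_pos.
  assert (Htc : 0 <= tau * c <= 1/2) by nra.
  split; [|split].
  - rewrite Hrho'. nra.
  - intros a Ha Haw Hz0. rewrite Hw', Hz'. split.
    + apply div_ge; [lra|]. assert (a*E*q <= a*E*(1+tau*K)) by (apply Rmult_le_compat_l; nra). nra.
    + apply div_le; [lra|]. nra.
  - intros a Ha Haw Hz0. rewrite Hw', Hz'. split.
    + apply div_ge; [lra|]. nra.
    + apply div_le; [lra|]. assert (a*E*q <= a*E*(1+tau*K)) by (apply Rmult_le_compat_l; nra). nra.
Qed.

Definition inv (b : bool) (a : R) (U : State) : Prop :=
  0 < fst U /\ (if b then a <= winv U /\ zinv U <= 0 else 0 <= winv U /\ zinv U <= - a).
Definition bnd (L : R) (U : State) : Prop := Rabs (winv U) <= L /\ Rabs (zinv U) <= L.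

Lemma wz_state (w z : R) : z < w ->
  0 < fst (state_of_wz w z) /\ winv (state_of_wz w z) = w /\ zinv (state_of_wz w z) = z.
Proof.
  intro H. unfold state_of_wz, winv, zinv; simpl. repeat split.
  - apply Rdiv_lt_0_compat; lra.
  - field. lra.
  - field. lra.
Qed.

Lemma inv_zw b a U : 0 < a -> inv b a U -> zinv U < winv U /\ (if b then 0 < winv U /\ zinv U <= 0 else 0 <= winv U /\ zinv U < 0).
Proof. intros Ha [H1 H2]. destruct b; lra. Qed.

Lemma mid_ok b a L UL UR : 0 < a -> inv b a UL -> inv b a UR -> bnd L UL -> bnd L UR ->
  zinv UL < winv UR /\ inv b a (state_of_wz (winv UR) (zinv UL)) /\ bnd L (state_of_wz (winv UR) (zinv UL)).
Proof.
  intros Ha HL HR BL BR.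
  assert (Hlt : zinv UL < winv UR).
  { destruct HL as [_ HL], HR as [_ HR]. destruct b; lra. }
  destruct (wz_state _ _ Hlt) as [H1 [H2 H3]].
  split; [exact Hlt|]. split.
  - split; [exact H1|]. rewrite H2, H3. destruct HL as [_ HL], HR as [_ HR]. destruct b; lra.
  - unfold bnd. rewrite H2, H3. destruct BL, BR. tauto.
Qed.

Lemma riem_P (P : State -> Prop) UL UR x0 t0 x t :
  P UL -> P UR -> P (state_of_wz (winv UR) (zinv UL)) -> P (riemann_sol UL UR x0 t0 x t).
Proof.
  intros H1 H2 H3. unfold riemann_sol, riemann_xi.
  destruct (Rle_dec t t0); [destruct (Rlt_dec x x0); auto|].
  destruct (Rlt_dec _ (zinv UL)); auto. destruct (Rlt_dec _ (winv UR)); auto.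
Qed.

Lemma ex_RInt_on_const (f : R -> R) (a b v : R) : a <= b ->
  (forall x, a < x < b -> f x = v) -> ex_RInt f a b.
Proof.
  intros Hab H. apply (ex_RInt_ext (fun _ => v)); [|apply ex_RInt_const].
  intros x Hx. rewrite Rmin_left in Hx by lra. rewrite Rmax_right in Hx by lra.
  symmetry. apply H. exact Hx.
Qed.

Lemma divlt (u v d : R) : 0 < d -> (u / d < v <-> u < v * d).
Proof.
  intro Hd. replace u with ((u/d)*d) at 2 by (field; lra). split; intro H.
  - apply Rmult_lt_compat_r; lra.
  - apply Rmult_lt_reg_r with d; lra.
Qed.

Lemma step_int (G : State -> R) UL UR x0 t0 t1 a b :
  t0 < t1 -> zinv UL <= winv UR -> a <= b ->
  ex_RInt (fun x => G (riemann_sol UL UR x0 t0 x t1)) a b.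
Proof.
  intros Ht Hzw Hab.
  set (d := t1 - t0). assert (Hd : 0 < d) by (unfold d; lra).
  set (p1 := x0 + zinv UL * d). set (p2 := x0 + winv UR * d).
  assert (Hp : p1 <= p2) by (unfold p1, p2; nra).
  set (c1 := Rmax a (Rmin b p1)). set (c2 := Rmax c1 (Rmin b p2)).
  assert (Hc1 : a <= c1 <= b).
  { unfold c1. split; [apply Rmax_l|]. apply Rmax_lub; [lra|apply Rmin_l]. }
  assert (Hc2 : c1 <= c2 <= b).
  { unfold c2. split; [apply Rmax_l|]. apply Rmax_lub; [lra|apply Rmin_l]. }
  assert (Hsol : forall x, riemann_sol UL UR x0 t0 x t1 =
     riemann_xi UL UR ((x - x0) / d)).
  { intro x. unfold riemann_sol. destruct (Rle_dec t1 t0); [lra|]. reflexivity. }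
  apply (ex_RInt_Chasles _ a c2 b).
  apply (ex_RInt_Chasles _ a c1 c2).
  - apply (ex_RInt_on_const _ _ _ (G UL)); [lra|]. intros x Hx.
    rewrite Hsol. unfold riemann_xi.
    assert (x < p1).
    { assert (Hx2 : x < c1) by lra. unfold c1 in Hx2.
      destruct (Rmax_Rle a (Rmin b p1) x) as [_ Hm].
      unfold Rmax in Hx2. destruct (Rle_dec a (Rmin b p1)); [|lra].
      pose proof (Rmin_r b p1). lra. }
    destruct (Rlt_dec _ (zinv UL)) as [|Hn]; [reflexivity|].
    exfalso. apply Hn. apply (proj2 (divlt _ _ d Hd)). unfold p1 in *. lra.
  - apply (ex_RInt_on_const _ _ _ (G (state_of_wz (winv UR) (zinv UL)))); [lra|]. intros x Hx.
    rewrite Hsol. unfold riemann_xi.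
    assert (p1 <= x).
    { assert (Hx1 : c1 < x) by lra. assert (Rmin b p1 <= c1) by apply Rmax_r.
      unfold Rmin in *. destruct (Rle_dec b p1); lra. }
    assert (x < p2).
    { assert (Hx2 : x < c2) by lra. unfold c2 in Hx2.
      unfold Rmax in Hx2. destruct (Rle_dec c1 (Rmin b p2)); [|lra].
      pose proof (Rmin_r b p2). lra. }
    destruct (Rlt_dec _ (zinv UL)) as [Hn|].
    { exfalso. apply (proj1 (divlt _ _ d Hd)) in Hn. unfold p1 in *. lra. }
    destruct (Rlt_dec _ (winv UR)) as [|Hn]; [reflexivity|].
    exfalso. apply Hn. apply (proj2 (divlt _ _ d Hd)). unfold p2 in *. lra.
  - apply (ex_RInt_on_const _ _ _ (G UR)); [lra|]. intros x Hx.
    rewrite Hsol. unfold riemann_xi.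
    assert (p2 <= x).
    { assert (Hx1 : c2 < x) by lra. assert (Rmin b p2 <= c2) by apply Rmax_r.
      unfold Rmin in *. destruct (Rle_dec b p2); lra. }
    destruct (Rlt_dec _ (zinv UL)) as [Hn|].
    { exfalso. apply (proj1 (divlt _ _ d Hd)) in Hn. unfold p1 in *. lra. }
    destruct (Rlt_dec _ (winv UR)) as [Hn|]; [|reflexivity].
    exfalso. apply (proj1 (divlt _ _ d Hd)) in Hn. unfold p2 in *. lra.
Qed.

Lemma avg_lin (f g : R -> R) (a b al be ga : R) : a < b ->
  ex_RInt f a b -> ex_RInt g a b ->
  (forall x, a < x < b -> 0 <= al * f x + be * g x + ga) ->
  0 <= al * (RInt f a b / (b - a)) + be * (RInt g a b / (b - a)) + ga.
Proof.
  intros Hab Hf Hg H.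
  assert (Hi : is_RInt (fun x => al * f x + be * g x + ga) a b
                 (al * RInt f a b + be * RInt g a b + (b - a) * ga)).
  { apply (is_RInt_plus (fun x => al * f x + be * g x) (fun _ => ga)).
    - apply (is_RInt_plus (fun x => al * f x) (fun x => be * g x)).
      + apply (is_RInt_scal f). exact (@RInt_correct R_CompleteNormedModule f a b Hf).
      + apply (is_RInt_scal g). exact (@RInt_correct R_CompleteNormedModule g a b Hg).
    - exact (@is_RInt_const R_NormedModule a b ga). }
  assert (Hge : 0 <= RInt (fun x => al * f x + be * g x + ga) a b).
  { apply RInt_ge_0; [lra| |exact H]. eexists. exact Hi. }
  rewrite (is_RInt_unique _ _ _ _ Hi) in Hge.
  replace (al * (RInt f a b / (b - a)) + be * (RInt g a b / (b - a)) + ga)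
    with ((al * RInt f a b + be * RInt g a b + (b - a) * ga) / (b - a)) by (field; lra).
  apply Rdiv_le_0_compat; lra.
Qed.

Lemma src_step (b : bool) (a L Kk Kb C : R) (k B : R -> R) (t tau : R) (U : State) :
  0 < a -> inv b a U -> bnd L U ->
  Rabs (Derive k t / k t) <= Kk -> Rabs (B t * Derive B t) <= Kb ->
  0 <= Derive B t / B t + Derive k t / (2 * k t) <= C -> 0 <= tau ->
  tau * (Kk + L*L*Kb) <= 1/2 -> tau * C <= 1/2 ->
  fst U / 2 <= fst U + Rsrc k B U t * tau /\
  inv b (a * exp (-(2*C + (Kk + L*L*Kb) + 1)*tau))
      (fst U + Rsrc k B U t * tau, snd U + Ssrc k B U t * tau).
Proof.
  intros Ha HI HB Hk Hb Hc Ht H1 H2.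
  destruct U as [rho m]. unfold inv, bnd, winv, zinv in *. simpl in *.
  destruct HI as [Hr HI]. destruct HB as [Hw Hz].
  destruct (src_core rho m (Derive k t / k t) (Derive B t / B t + Derive k t / (2 * k t))
             (B t * Derive B t) tau L Kk Kb C Hr Hw Hz Hk Hb Hc Ht H1 H2) as [G1 [G2 G3]].
  assert (ER : Rsrc k B (rho, m) t = - rho * (Derive k t / k t) + (m^2-1)/rho * (B t * Derive B t)).
  { unfold Rsrc. simpl. unfold Rdiv. ring. }
  assert (ES : Ssrc k B (rho, m) t = - 2 * m * (Derive B t / B t + Derive k t / (2 * k t))).
  { unfold Ssrc. simpl. reflexivity. }
  rewrite ER, ES. split; [exact G1|]. split; [lra|].
  destruct b.
  - apply G2; tauto.
  - apply G3; tauto.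
Qed.

Lemma inv_lin (b : bool) (a : R) (U : State) : inv b a U ->
  if b then 0 <= - a * fst U + snd U + 1 /\ 0 <= - snd U + 1
  else 0 <= snd U + 1 /\ 0 <= - a * fst U - snd U + 1.
Proof.
  destruct U as [rho m]. unfold inv, winv, zinv. simpl. intros [Hr H].
  assert (Hm1 : m + 1 = (m+1)/rho * rho) by (field; lra).
  assert (Hm2 : m - 1 = (m-1)/rho * rho) by (field; lra).
  destruct b; destruct H as [H1 H2]; split; nra.
Qed.

Lemma lin_inv (b : bool) (a : R) (U : State) : 0 < fst U ->
  (if b then 0 <= - a * fst U + snd U + 1 /\ 0 <= - snd U + 1
   else 0 <= snd U + 1 /\ 0 <= - a * fst U - snd U + 1) -> inv b a U.
Proof.
  destruct U as [rho m]. unfold inv, winv, zinv. simpl. intros Hr H.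
  split; [exact Hr|]. destruct b; destruct H as [H1 H2]; split.
  - apply div_ge; lra.
  - apply div_le; lra.
  - apply div_ge; lra.
  - apply div_le; lra.
Qed.

Lemma rho_lb (L : R) (U : State) : 0 < fst U -> bnd L U -> 1 / L <= fst U.
Proof.
  destruct U as [rho m]. unfold bnd, winv, zinv. simpl. intros Hr [Hw Hz].
  assert (E : (m+1)/rho - (m-1)/rho = 2 / rho) by (field; lra).
  apply Rabs_le_between in Hw. apply Rabs_le_between in Hz.
  assert (HL : 0 < L).
  { assert (0 < 2 / rho) by (apply Rdiv_lt_0_compat; lra). lra. }
  assert (2 / rho <= 2 * L) by lra.
  apply div_le; [lra|].
  assert (2 <= 2 * L * rho).
  { replace 2 with (2 / rho * rho) at 1 by (field; lra). nra. }
  lra.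
Qed.

Lemma j_par (n : nat) (x l : R) : exists q,
  (Z.of_nat n + (2 * Int_part ((x / l - IZR (if Nat.even n then 0 else 1) + 1) / 2)
     + (if Nat.even n then 0 else 1)) = 2 * q)%Z.
Proof.
  destruct (Nat.even n) eqn:E.
  - apply Nat.even_spec in E. destruct E as [m Hm].
    exists (Z.of_nat m + Int_part ((x / l - IZR 0 + 1) / 2))%Z. lia.
  - assert (E' : Nat.odd n = true) by (rewrite <- Nat.negb_even, E; reflexivity).
    apply Nat.odd_spec in E'. destruct E' as [m Hm].
    exists (Z.of_nat m + Int_part ((x / l - IZR 1 + 1) / 2) + 1)%Z. lia.
Qed.

Lemma approx_at_grid k B h l rho0 m0 (n : nat) (i : Z) :
  0 < h -> 0 < l -> (exists q, Z.of_nat n + i = 2 * q + 1)%Z ->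
  LF_approx k B h l rho0 m0 (IZR i * l) (INR n * h) = LF_grid k B h l rho0 m0 n i.
Proof.
  intros Hh Hl [q Hq]. unfold LF_approx.
  replace (INR n * h / h) with (INR n) by (field; lra).
  rewrite Int_part_INR, Nat2Z.id. cbv zeta.
  set (p := if Nat.even n then 0%Z else 1%Z).
  assert (Hp : exists r, (i - p + 1 = 2 * r)%Z).
  { unfold p. destruct (Nat.even n) eqn:E.
    - apply Nat.even_spec in E. destruct E as [m Hm]. exists (q - Z.of_nat m + 1)%Z. lia.
    - assert (E' : Nat.odd n = true) by (rewrite <- Nat.negb_even, E; reflexivity).
      apply Nat.odd_spec in E'. destruct E' as [m Hm]. exists (q - Z.of_nat m)%Z. lia. }
  destruct Hp as [r Hr].
  replace ((IZR i * l / l - IZR p + 1) / 2) with (IZR r).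
  2:{ assert (IZR i = 2 * IZR r + IZR p - 1).
      { rewrite <- mult_IZR. rewrite <- plus_IZR. rewrite <- minus_IZR. f_equal. lia. }
      rewrite H. field. lra. }
  assert (HI : Int_part (IZR r) = r) by (symmetry; apply Int_part_spec; lra).
  rewrite HI.
  assert (Hj : (2 * r + p)%Z = (i + 1)%Z) by lia.
  rewrite Hj.
  unfold cell_sol, riemann_sol. cbv zeta. replace (i + 1 - 1)%Z with i by ring.
  destruct (Rle_dec (INR n * h) (INR n * h)) as [_|Hn]; [|lra].
  destruct (Rlt_dec (IZR i * l) (IZR (i + 1) * l)) as [_|Hn].
  2:{ exfalso. apply Hn. rewrite plus_IZR. nra. }
  destruct (LF_grid k B h l rho0 m0 n i) as [x y]. simpl.
  f_equal; ring.
Qed.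

Lemma main_b (T : R) (k B : R -> R) (Lam : R) (rho0 m0 : R -> R) (delta0 Kk Kb C : R) (b : bool) :
  0 < T -> 0 < Lam -> 0 < delta0 -> 0 <= Kk -> 0 <= Kb -> 0 <= C ->
  (forall t, 0 <= t <= T -> Rabs (Derive k t / k t) <= Kk) ->
  (forall t, 0 <= t <= T -> Rabs (B t * Derive B t) <= Kb) ->
  (forall t, 0 <= t <= T -> 0 <= Derive B t / B t + Derive k t / (2 * k t) <= C) ->
  (forall x, inv b delta0 (rho0 x, m0 x)) ->
  forall h l, 0 < h -> h * (Kk + Lam*Lam*Kb + C + 1) <= 1/2 -> 0 < l -> l / (2 * h) <= Lam ->
  CFL T k B h l rho0 m0 ->
  forall x t, 0 <= t <= T ->
    inv b (delta0 * exp (-(2*C + (Kk + Lam*Lam*Kb) + 1) * t)) (LF_approx k B h l rho0 m0 x t).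
Proof.
  intros HT HL Hd HKk HKb HC BK BB BC Hinit h l Hh Hh0 Hl HlL Hcfl.
  set (K := Kk + Lam*Lam*Kb) in *.
  set (A := 2*C + K + 1).
  assert (HK : 0 <= K) by (unfold K; nra).
  assert (Htau : forall tau, 0 <= tau <= h -> tau * K <= 1/2 /\ tau * C <= 1/2).
  { intros tau Ht. split; nra. }
  assert (Hgb : forall n i, INR n * h <= T -> (exists q, Z.of_nat n + i = 2 * q + 1)%Z ->
            bnd Lam (LF_grid k B h l rho0 m0 n i)).
  { intros n i Hn Hi. rewrite <- (approx_at_grid k B h l rho0 m0 n i Hh Hl Hi).
    assert (0 <= INR n * h) by (apply Rmult_le_pos; [apply pos_INR|lra]).
    destruct (Hcfl (IZR i * l) (INR n * h)) as [H1 H2]; [lra|].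
    split; lra. }
  assert (Hgi : forall n, INR n * h <= T -> forall i, (exists q, Z.of_nat n + i = 2 * q + 1)%Z ->
            inv b (delta0 * exp (- A * (INR n * h))) (LF_grid k B h l rho0 m0 n i)).
  { induction n as [|n IH]; intros Hn i Hi.
    - simpl LF_grid. simpl INR. rewrite Rmult_0_l, Rmult_0_r, exp_0, Rmult_1_r. apply Hinit.
    - rewrite S_INR in Hn.
      assert (Hn' : INR n * h <= T) by lra.
      assert (Hn0 : 0 <= INR n * h) by (apply Rmult_le_pos; [apply pos_INR|lra]).
      destruct Hi as [q Hq].
      assert (HiL : exists q, (Z.of_nat n + (i - 1) = 2 * q + 1)%Z) by (exists (q - 1)%Z; lia).
      assert (HiR : exists q, (Z.of_nat n + (i + 1) = 2 * q + 1)%Z) by (exists q; lia).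
      set (an := delta0 * exp (- A * (INR n * h))).
      assert (Han : 0 < an) by (unfold an; apply Rmult_lt_0_compat; [lra|apply exp_pos]).
      set (UL := LF_grid k B h l rho0 m0 n (i - 1)).
      set (UR := LF_grid k B h l rho0 m0 n (i + 1)).
      assert (IL : inv b an UL) by (apply IH; auto).
      assert (IR : inv b an UR) by (apply IH; auto).
      assert (BL : bnd Lam UL) by (apply Hgb; auto).
      assert (BR : bnd Lam UR) by (apply Hgb; auto).
      destruct (mid_ok b an Lam UL UR Han IL IR BL BR) as [Hzw [IM BM]].
      set (t0 := INR n * h). set (t1 := INR (S n) * h).
      assert (Ht1 : t1 = t0 + h) by (unfold t1, t0; rewrite S_INR; ring).
      assert (HtT : 0 <= t1 <= T) by (unfold t1; rewrite S_INR; split; [apply Rmult_le_pos; [pose proof (pos_INR n)|]|]; lra).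
      set (x0 := IZR i * l).
      set (G1 := fun U : State => fst U + Rsrc k B U t1 * (t1 - t0)).
      set (G2 := fun U : State => snd U + Ssrc k B U t1 * (t1 - t0)).
      set (F1 := fun x => G1 (riemann_sol UL UR x0 t0 x t1)).
      set (F2 := fun x => G2 (riemann_sol UL UR x0 t0 x t1)).
      assert (Hpt : forall x, fst (riemann_sol UL UR x0 t0 x t1) / 2 <= F1 x /\
                 inv b (an * exp (- A * (t1 - t0))) (F1 x, F2 x) /\
                 1 / Lam <= fst (riemann_sol UL UR x0 t0 x t1)).
      { intro x.
        assert (HV : inv b an (riemann_sol UL UR x0 t0 x t1) /\ bnd Lam (riemann_sol UL UR x0 t0 x t1)).
        { apply (riem_P (fun V => inv b an V /\ bnd Lam V)); auto. }
        destruct HV as [HV1 HV2].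
        assert (Hb1 : 0 <= t1 <= T) by lra.
        destruct (Htau (t1 - t0)) as [T1 T2]; [lra|].
        destruct (src_step b an Lam Kk Kb C k B t1 (t1 - t0) _ Han HV1 HV2 (BK _ Hb1) (BB _ Hb1)
                   (BC _ Hb1) ltac:(lra) T1 T2) as [S1 S2].
        split; [exact S1|]. split; [exact S2|].
        apply rho_lb; [apply HV1|exact HV2]. }
      assert (HaL : (IZR i - 1) * l < (IZR i + 1) * l) by nra.
      assert (Hex1 : ex_RInt F1 ((IZR i - 1) * l) ((IZR i + 1) * l)).
      { apply step_int; lra. }
      assert (Hex2 : ex_RInt F2 ((IZR i - 1) * l) ((IZR i + 1) * l)).
      { apply step_int; lra. }
      change (LF_grid k B h l rho0 m0 (S n) i) with (LF_step k B h l (LF_grid k B h l rho0 m0 n) n i).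
      unfold LF_step. cbv zeta.
      change (fun x => fst (cell_sol k B h l (LF_grid k B h l rho0 m0 n) n i x (INR (S n) * h))) with F1.
      change (fun x => snd (cell_sol k B h l (LF_grid k B h l rho0 m0 n) n i x (INR (S n) * h))) with F2.
      replace (2 * l) with ((IZR i + 1) * l - (IZR i - 1) * l) by ring.
      set (a := (IZR i - 1) * l) in *. set (bb := (IZR i + 1) * l) in *.
      assert (Ha' : delta0 * exp (- A * t1) = an * exp (- A * (t1 - t0))).
      { unfold an. rewrite Rmult_assoc, <- exp_plus. f_equal. f_equal. unfold t1, t0. ring. }
      assert (Hrho : 0 <= 1 * (RInt F1 a bb / (bb - a)) + 0 * (RInt F2 a bb / (bb - a)) + - (1 / Lam / 2)).
      { apply avg_lin; auto. intros x _. destruct (Hpt x) as [P1 [_ P3]].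
        assert (1 / Lam / 2 <= F1 x) by lra. lra. }
      apply lin_inv; cbn [fst snd].
      { assert (0 < 1 / Lam / 2) by (apply Rdiv_lt_0_compat; [apply Rdiv_lt_0_compat|]; lra). lra. }
      rewrite Ha'.
      set (ae := an * exp (- A * (t1 - t0))) in *.
      destruct b; split.
      + assert (H := avg_lin F1 F2 a bb (- ae) 1 1 HaL Hex1 Hex2
          (fun x _ => let Q := inv_lin true _ _ (proj1 (proj2 (Hpt x))) in
                      ltac:(simpl in Q; lra))). lra.
      + assert (H := avg_lin F1 F2 a bb 0 (-1) 1 HaL Hex1 Hex2
          (fun x _ => let Q := inv_lin true _ _ (proj1 (proj2 (Hpt x))) in
                      ltac:(simpl in Q; lra))). lra.
      + assert (H := avg_lin F1 F2 a bb 0 1 1 HaL Hex1 Hex2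
          (fun x _ => let Q := inv_lin false _ _ (proj1 (proj2 (Hpt x))) in
                      ltac:(simpl in Q; lra))). lra.
      + assert (H := avg_lin F1 F2 a bb (- ae) (-1) 1 HaL Hex1 Hex2
          (fun x _ => let Q := inv_lin false _ _ (proj1 (proj2 (Hpt x))) in
                      ltac:(simpl in Q; lra))). lra.
  }
  intros x t Ht.
  set (n := Z.to_nat (Int_part (t / h))).
  assert (Hn : INR n * h <= t < INR n * h + h).
  { destruct (base_Int_part (t / h)) as [I1 I2].
    assert (Htd : 0 <= t / h) by (apply Rdiv_le_0_compat; lra).
    assert (Hz : (0 <= Int_part (t / h))%Z).
    { assert (Hm : (-1 < Int_part (t / h))%Z) by (apply lt_IZR; simpl; lra). lia. }
    assert (HnI : INR n = IZR (Int_part (t / h))).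
    { unfold n. rewrite INR_IZR_INZ, Z2Nat.id by exact Hz. reflexivity. }
    rewrite HnI.
    assert (Ht' : t = t / h * h) by (field; lra).
    split; nra. }
  assert (Hn0 : 0 <= INR n * h) by (apply Rmult_le_pos; [apply pos_INR|lra]).
  unfold LF_approx. cbv zeta.
  change (Z.to_nat (Int_part (t / h))) with n.
  destruct (j_par n x l) as [q Hq].
  set (j := (2 * Int_part ((x / l - IZR (if Nat.even n then 0 else 1) + 1) / 2)
     + (if Nat.even n then 0 else 1))%Z) in *.
  assert (HiL : exists q, (Z.of_nat n + (j - 1) = 2 * q + 1)%Z) by (exists (q - 1)%Z; lia).
  assert (HiR : exists q, (Z.of_nat n + (j + 1) = 2 * q + 1)%Z) by (exists q; lia).
  set (an := delta0 * exp (- A * (INR n * h))).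
  assert (Han : 0 < an) by (unfold an; apply Rmult_lt_0_compat; [lra|apply exp_pos]).
  set (UL := LF_grid k B h l rho0 m0 n (j - 1)).
  set (UR := LF_grid k B h l rho0 m0 n (j + 1)).
  assert (IL : inv b an UL) by (apply Hgi; [lra|auto]).
  assert (IR : inv b an UR) by (apply Hgi; [lra|auto]).
  assert (BL : bnd Lam UL) by (apply Hgb; [lra|auto]).
  assert (BR : bnd Lam UR) by (apply Hgb; [lra|auto]).
  destruct (mid_ok b an Lam UL UR Han IL IR BL BR) as [Hzw [IM BM]].
  unfold cell_sol. cbv zeta. fold UL UR.
  set (V := riemann_sol UL UR (IZR j * l) (INR n * h) x t).
  assert (HV : inv b an V /\ bnd Lam V).
  { apply (riem_P (fun V => inv b an V /\ bnd Lam V)); auto. }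
  destruct HV as [HV1 HV2].
  destruct (Htau (t - INR n * h)) as [T1 T2]; [lra|].
  destruct (src_step b an Lam Kk Kb C k B t (t - INR n * h) _ Han HV1 HV2 (BK _ Ht) (BB _ Ht)
             (BC _ Ht) ltac:(lra) T1 T2) as [S1 S2].
  replace (delta0 * exp (- A * t)) with (an * exp (-(2*C + K + 1) * (t - INR n * h))).
  { exact S2. }
  unfold an, A. rewrite Rmult_assoc, <- exp_plus. f_equal. f_equal. ring.
Qed.

Theorem theorem1 (T : R) (k B : R -> R) (Lam : R) (rho0 m0 : R -> R) (delta0 P0 : R) :
  0 < T -> 0 < Lam -> 0 < delta0 -> 0 < P0 ->
  (forall (n : nat) (t : R), ex_derive (Derive_n k n) t) ->
  (forall (n : nat) (t : R), ex_derive (Derive_n B n) t) ->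
  (forall t, 0 <= t <= T -> 0 < k t /\ 0 < B t) ->
  (forall t, 0 <= t <= T -> Derive_n B 2 t = (k t) ^ 2 * B t) ->
  B T = 1 -> Derive B T = 0 ->
  (forall s t, 0 <= s -> s <= t -> t <= T ->
     ln ((B s) ^ 2 * k s) <= ln ((B t) ^ 2 * k t)) ->
  (forall x, 0 < rho0 x) ->
  ((forall x, delta0 <= winv (rho0 x, m0 x) <= P0 /\ - P0 <= zinv (rho0 x, m0 x) <= 0) ->
   exists h0 P A : R, 0 < h0 /\ 0 < P /\ 0 < A /\
     forall h l : R, 0 < h -> h <= h0 -> 0 < l -> l / (2 * h) <= Lam ->
       CFL T k B h l rho0 m0 ->
       forall x t, 0 <= t <= T ->
         delta0 * exp (- A * T) <= winv (LF_approx k B h l rho0 m0 x t) <= P /\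
         - P <= zinv (LF_approx k B h l rho0 m0 x t) <= 0)
  /\
  ((forall x, 0 <= winv (rho0 x, m0 x) <= P0 /\ - P0 <= zinv (rho0 x, m0 x) <= - delta0) ->
   exists h0 P A : R, 0 < h0 /\ 0 < P /\ 0 < A /\
     forall h l : R, 0 < h -> h <= h0 -> 0 < l -> l / (2 * h) <= Lam ->
       CFL T k B h l rho0 m0 ->
       forall x t, 0 <= t <= T ->
         0 <= winv (LF_approx k B h l rho0 m0 x t) <= P /\
         - P <= zinv (LF_approx k B h l rho0 m0 x t) <= - (delta0 * exp (- A * T))).
Proof.
  intros HT HL Hd HP0 Hk HB Hpos _ _ _ Hln Hrho.
  assert (ck : forall t, continuity_pt k t) by (intro t; exact (cont_of_ex k t (Hk 0%nat t))).
  assert (cB : forall t, continuity_pt B t) by (intro t; exact (cont_of_ex B t (HB 0%nat t))).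
  assert (cDk : forall t, continuity_pt (Derive k) t) by (intro t; exact (cont_of_ex _ t (Hk 1%nat t))).
  assert (cDB : forall t, continuity_pt (Derive B) t) by (intro t; exact (cont_of_ex _ t (HB 1%nat t))).
  destruct (bound_cont (fun t => Derive k t / k t) T ltac:(lra)) as [Kk [HKk BK]].
  { intros t Ht. apply (continuity_pt_div (Derive k) k); auto.
    destruct (Hpos t Ht); lra. }
  destruct (bound_cont (fun t => B t * Derive B t) T ltac:(lra)) as [Kb [HKb BB]].
  { intros t Ht. apply (continuity_pt_mult B (Derive B)); auto. }
  destruct (bound_cont (fun t => Derive B t / B t + Derive k t / (2 * k t)) T ltac:(lra)) as [C [HC BC]].
  { intros t Ht. destruct (Hpos t Ht).
    apply (continuity_pt_plus (fun t => Derive B t / B t) (fun t => Derive k t / (2 * k t))).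
    - apply (continuity_pt_div (Derive B) B); auto; lra.
    - apply (continuity_pt_div (Derive k) (fun t => 2 * k t)); auto.
      + apply (continuity_pt_mult (fun _ => 2) k); auto. apply continuity_pt_const. intros a b; reflexivity.
      + lra. }
  assert (Hc0 : forall t, 0 <= t <= T -> 0 <= Derive B t / B t + Derive k t / (2 * k t) <= C).
  { intros t Ht. destruct (Hpos t Ht) as [Hkt HBt].
    assert (Hmono : forall s u, 0 <= s -> s <= u -> u <= T -> B s ^ 2 * k s <= B u ^ 2 * k u).
    { intros s u H1 H2 H3. destruct (Hpos s ltac:(lra)), (Hpos u ltac:(lra)).
      destruct (Rle_lt_dec (B s ^ 2 * k s) (B u ^ 2 * k u)) as [|Hlt]; [assumption|].
      exfalso. assert (Hgu : 0 < B u ^ 2 * k u) by (apply Rmult_lt_0_compat; [apply pow_lt|]; lra).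
      pose proof (ln_increasing _ _ Hgu Hlt). pose proof (Hln s u H1 H2 H3). lra. }
    assert (Hder : is_derive (fun s => B s ^ 2 * k s) t
                     (2 * B t * Derive B t * k t + B t ^ 2 * Derive k t)).
    { auto_derive.
      - split; [exact (HB 0%nat t)|split; [exact (Hk 0%nat t)|exact I]].
      - change (Derive (fun x => B x) t) with (Derive B t). change (Derive (fun x => k x) t) with (Derive k t). ring. }
    pose proof (deriv_nonneg_mono _ T t _ HT Ht Hmono Hder) as HD.
    split.
    + replace (Derive B t / B t + Derive k t / (2 * k t))
        with ((2 * B t * Derive B t * k t + B t ^ 2 * Derive k t) / (2 * B t ^ 2 * k t))
        by (field; lra).
      apply Rdiv_le_0_compat; [exact HD|]. apply Rmult_lt_0_compat; [|lra].
      apply Rmult_lt_0_compat; [lra|apply pow_lt; lra].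
    + pose proof (BC t Ht). apply Rabs_le_between in H. lra. }
  set (K := Kk + Lam*Lam*Kb).
  assert (HK : 0 <= K) by (unfold K; nra).
  set (A := 2*C + K + 1).
  assert (HA : 0 < A) by (unfold A; lra).
  set (h0 := 1 / (2 * (K + C + 1))).
  assert (Hh0 : 0 < h0) by (unfold h0; apply Rdiv_lt_0_compat; lra).
  assert (Hhh : forall h, h <= h0 -> 0 < h -> h * (Kk + Lam*Lam*Kb + C + 1) <= 1/2).
  { intros h H1 H2. fold K. unfold h0 in H1.
    assert (h * (2 * (K + C + 1)) <= 1).
    { apply (Rmult_le_compat_r (2 * (K + C + 1))) in H1; [|lra].
      replace (1 / (2 * (K + C + 1)) * (2 * (K + C + 1))) with 1 in H1 by (field; lra). exact H1. }
    lra. }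
  assert (HexpT : forall t, 0 <= t <= T -> delta0 * exp (- A * T) <= delta0 * exp (- A * t)).
  { intros t Ht. apply Rmult_le_compat_l; [lra|].
    destruct (Req_dec t T) as [->|Hne]; [lra|]. left. apply exp_increasing. nra. }
  split.
  - intro Hinit. exists h0, Lam, A. split; [exact Hh0|]. split; [exact HL|]. split; [exact HA|].
    intros h l Hh Hhh0 Hl HlL Hcfl x t Ht.
    assert (Hi : forall x, inv true delta0 (rho0 x, m0 x)).
    { intro y. split; [exact (Hrho y)|]. destruct (Hinit y). lra. }
    pose proof (main_b T k B Lam rho0 m0 delta0 Kk Kb C true HT HL Hd HKk HKb HC BK BB Hc0 Hi
                  h l Hh (Hhh h Hhh0 Hh) Hl HlL Hcfl x t Ht) as [_ [H1 H2]].
    destruct (Hcfl x t Ht) as [C1 C2].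
    apply Rabs_def2 in C1. apply Rabs_def2 in C2.
    pose proof (HexpT t Ht). fold K A in H1. split; split; lra.
  - intro Hinit. exists h0, Lam, A. split; [exact Hh0|]. split; [exact HL|]. split; [exact HA|].
    intros h l Hh Hhh0 Hl HlL Hcfl x t Ht.
    assert (Hi : forall x, inv false delta0 (rho0 x, m0 x)).
    { intro y. split; [exact (Hrho y)|]. destruct (Hinit y). lra. }
    pose proof (main_b T k B Lam rho0 m0 delta0 Kk Kb C false HT HL Hd HKk HKb HC BK BB Hc0 Hi
                  h l Hh (Hhh h Hhh0 Hh) Hl HlL Hcfl x t Ht) as [_ [H1 H2]].
    destruct (Hcfl x t Ht) as [C1 C2].
    apply Rabs_def2 in C1. apply Rabs_def2 in C2.
    pose proof (HexpT t Ht). fold K A in H2. split; split; lra.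
Qed.
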